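(* Let $L = L_p + \varepsilon L_d \in \mathbb{DH}[t]$ with $L_p, L_d$ vectorial and satisfying the Plücker condition $L_p\overline{L_d} + L_d\overline{L_p} = 0$, let $h \in \mathbb{R}[t]$, and let $P, D \in \mathbb{H}[t]$ with $P \neq 0$ satisfy $$P\mathbf{k}\overline{P} = hL_p, \qquad -P\mathbf{k}\overline{D} - D\mathbf{k}\overline{P} = hL_d .$$ Then $P\overline{D} + D\overline{P} = 0$.
   Context: $\mathbb{H}$ denotes the real quaternions with units $\mathbf{i},\mathbf{j},\mathbf{k}$ and conjugation $\overline{p_0 + p_1\mathbf{i} + p_2\mathbf{j} + p_3\mathbf{k}} = p_0 - p_1\mathbf{i} - p_2\mathbf{j} - p_3\mathbf{k}$; $\mathbb{DH} = \mathbb{H} + \varepsilon\mathbb{H}$ with $\varepsilon^2=0$, $\varepsilon$ central. $\mathbb{H}[t]$, $\mathbb{DH}[t]$ are polynomial rings in a real indeterminate $t$ commuting with the coefficients; conjugation acts coefficientwise. A quaternion polynomial is vectorial if its scalar part is zero. *)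

(* Defs.v *)
(* H[t] is modelled as quat {poly R}: a polynomial with quaternion coefficients
   is the same as a quaternion whose four components are real polynomials
   (t commutes with everything), and coefficientwise conjugation is
   componentwise negation of the vector part. *)
From HB Require Import structures.
From mathcomp Require Import all_boot all_order all_algebra.
From mathcomp Require Import reals.
Set Implicit Arguments. Unset Strict Implicit. Unset Printing Implicit Defensive.
Import GRing.Theory.
Local Open Scope ring_scope.

Record quat (A : Type) := Quat { q0 : A; q1 : A; q2 : A; q3 : A }.

Section QuatOps.
Variable A : comRingType.

Definition qadd (p q : quat A) : quat A :=
  Quat (q0 p + q0 q) (q1 p + q1 q) (q2 p + q2 q) (q3 p + q3 q).

Definition qopp (p : quat A) : quat A :=
  Quat (- q0 p) (- q1 p) (- q2 p) (- q3 p).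

Definition qmul (p q : quat A) : quat A :=
  Quat (q0 p * q0 q - q1 p * q1 q - q2 p * q2 q - q3 p * q3 q)
       (q0 p * q1 q + q1 p * q0 q + q2 p * q3 q - q3 p * q2 q)
       (q0 p * q2 q - q1 p * q3 q + q2 p * q0 q + q3 p * q1 q)
       (q0 p * q3 q + q1 p * q2 q - q2 p * q1 q + q3 p * q0 q).

Definition qconj (p : quat A) : quat A :=
  Quat (q0 p) (- q1 p) (- q2 p) (- q3 p).

Definition qzero : quat A := Quat 0 0 0 0.

Definition qscal (a : A) : quat A := Quat a 0 0 0.

Definition qk : quat A := Quat 0 0 0 1.

Definition vectorial (p : quat A) : Prop := q0 p = 0.
End QuatOps.

(* Dual quaternions: primal + eps * dual *)
Record dquat (A : Type) := DQuat { dprimal : quat A; ddual : quat A }.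

Definition quatpoly (R : realType) := quat {poly R}.
Definition dquatpoly (R : realType) := dquat {poly R}.

(* Main.v *)
Require Import Defs.
From mathcomp Require Import all_boot all_order all_algebra reals ring lra.
Import GRing.Theory Num.Theory.
Local Open Scope ring_scope.

Lemma poly_all0 (R : realType) (p : {poly R}) : (forall x, p.[x] = 0) -> p = 0.
Proof.
move=> H; apply: (@roots_geq_poly_eq0 _ p [seq i%:R | i <- iota 0 (size p)]).
- by apply/allP => x /mapP [i _ ->]; rewrite /root H.
- rewrite map_inj_uniq ?iota_uniq // => i j /eqP; rewrite eqr_nat => /eqP.
  done.
- by rewrite size_map size_iota.
Qed.

Lemma sq0 (R : realType) (x : R) : x * x = 0 -> x = 0.
Proof. by move/eqP; rewrite mulf_eq0 orbb => /eqP. Qed.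

Lemma sos0 (R : realType) (a b c d : {poly R}) :
  a * a + b * b + c * c + d * d = 0 -> a = 0 /\ b = 0 /\ c = 0 /\ d = 0.
Proof.
move=> H.
have E : forall x, a.[x] = 0 /\ b.[x] = 0 /\ c.[x] = 0 /\ d.[x] = 0.
  move=> x; have := congr1 (fun p => p.[x]) H; rewrite /= !hornerE => e.
  have ha := sqr_ge0 a.[x]; have hb := sqr_ge0 b.[x]; have hc := sqr_ge0 c.[x]; have hd := sqr_ge0 d.[x].
  rewrite !expr2 in ha hb hc hd.
  split; [apply: sq0; lra|split; [apply: sq0; lra|split; apply: sq0; lra]].
split; [apply: poly_all0 => x; apply (E x)|split; [apply: poly_all0 => x; apply (E x)|split; apply: poly_all0 => x; apply (E x)]].
Qed.

Theorem lemma2 (R : realType) (L : dquatpoly R) (h : {poly R}) (P D : quatpoly R) :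
  vectorial (dprimal L) -> vectorial (ddual L) ->
  qadd (qmul (dprimal L) (qconj (ddual L)))
       (qmul (ddual L) (qconj (dprimal L))) = qzero _ ->
  P <> qzero _ ->
  qmul (qmul P (qk _)) (qconj P) = qmul (qscal h) (dprimal L) ->
  qadd (qopp (qmul (qmul P (qk _)) (qconj D)))
       (qopp (qmul (qmul D (qk _)) (qconj P))) = qmul (qscal h) (ddual L) ->
  qadd (qmul P (qconj D)) (qmul D (qconj P)) = qzero _.
Proof.
case: L => [[l0 l1 l2 l3] [m0 m1 m2 m3]]; case: P => [a0 a1 a2 a3]; case: D => [b0 b1 b2 b3].
rewrite /vectorial /= => -> -> Hpl HP HX HY.
have pl := congr1 (@q0 _) Hpl; rewrite /= in pl.
have X1 := congr1 (@q1 _) HX; have X2 := congr1 (@q2 _) HX; have X3 := congr1 (@q3 _) HX.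
have Y1 := congr1 (@q1 _) HY; have Y2 := congr1 (@q2 _) HY; have Y3 := congr1 (@q3 _) HY.
rewrite /= in X1 X2 X3 Y1 Y2 Y3.
set s := a0 * b0 + a1 * b1 + a2 * b2 + a3 * b3.
set n := a0 * a0 + a1 * a1 + a2 * a2 + a3 * a3.
have two : (2%:R : {poly R}) != 0 by rewrite -polyC_natr polyC_eq0 pnatr_eq0.
have key : s * n = 0.
  have lm : l1 * m1 + l2 * m2 + l3 * m3 = 0.
    have : 2%:R * (l1 * m1 + l2 * m2 + l3 * m3) = 0 by rewrite -pl; ring.
    by move/eqP; rewrite mulf_eq0 (negbTE two) /= => /eqP.
  have T := congr2 (fun x y => x + y) (congr2 (fun x y => x + y) (congr2 (fun x y => x * y) X1 Y1) (congr2 (fun x y => x * y) X2 Y2)) (congr2 (fun x y => x * y) X3 Y3).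
  rewrite /= in T.
  have lm' : (h * l1) * (h * m1) + (h * l2) * (h * m2) + (h * l3) * (h * m3) = 0.
    by transitivity (h * h * (l1 * m1 + l2 * m2 + l3 * m3)); [ring| rewrite lm mulr0].
  rewrite !(mul0r, mulr0, addr0, subr0, add0r, sub0r) in T.
  have T' := etrans T lm'.
  have : (- 2%:R) * (s * n) = 0.
    rewrite -T' /s /n. ring.
  by move/eqP; rewrite mulf_eq0 oppr_eq0 (negbTE two) /= => /eqP.
have s0 : s = 0.
  move/eqP: key; rewrite mulf_eq0 => /orP [/eqP //|/eqP /sos0 [e0 [e1 [e2 e3]]]].
  by exfalso; apply: HP; rewrite e0 e1 e2 e3.
rewrite /qadd /qmul /qconj /= /qzero; congr Quat.
- by rewrite -(mulr0 2%:R) -s0 /s; ring.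
- ring.
- ring.
- ring.
Qed.
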